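(* For any $n\ge 1$, the degree polynomial of $(\mathsf{Tr}(n),\preccurlyeq)$ is $$\mathrm{d}_{\mathsf{Tr}(n)}(x,y)=(x+y)^{n-2}\left(x^2+(n+1)xy+y^2\right).$$
   Context: A triword of size $n$ is a word $u=u_1\cdots u_n$ with $u_i\in\{0,1,2\}$, $u_1\ne 2$, and such that $u_i=0$ implies $u_j\neq 1$ for all $j>i$; $\mathsf{Tr}(n)$ is their set, ordered componentwise ($u\preccurlyeq v$ iff $u_i\le v_i$ for all $i$). The degree polynomial is $\mathrm{d}_{\mathsf{Tr}(n)}(x,y)=\sum_{u\in\mathsf{Tr}(n)}x^{\mathrm{in}(u)}y^{\mathrm{out}(u)}$, where $\mathrm{in}(u)$ (resp. $\mathrm{out}(u)$) is the number of elements covered by (resp. covering) $u$. (For $n=1$ the formula is read as the rational expression, equal to $x+y$.) *)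

(* Defs.v *)
From mathcomp Require Import all_boot all_algebra.
Set Implicit Arguments. Unset Strict Implicit. Unset Printing Implicit Defensive.
Import GRing.Theory.

(* A word of size n over {0,1,2}; position i (0-based) holds u_{i+1}. *)
Definition word (n : nat) := {ffun 'I_n -> 'I_3}.

Definition is_triword (n : nat) (u : word n) : bool :=
  [forall i : 'I_n, (nat_of_ord i == 0) ==> (nat_of_ord (u i) != 2)] &&
  [forall i : 'I_n, forall j : 'I_n,
     ((i < j)%N && (nat_of_ord (u i) == 0)) ==> (nat_of_ord (u j) != 1)].

Definition leW (n : nat) (u v : word n) : bool :=
  [forall i : 'I_n, (nat_of_ord (u i) <= nat_of_ord (v i))%N].
Definition ltW (n : nat) (u v : word n) : bool := leW u v && (u != v).

Definition covers (n : nat) (u v : word n) : bool :=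
  [&& is_triword u, is_triword v, ltW u v &
      ~~ [exists w : word n, [&& is_triword w, ltW u w & ltW w v]]].

Definition indeg (n : nat) (u : word n) : nat := #|[set v : word n | covers v u]|.
Definition outdeg (n : nat) (u : word n) : nat := #|[set v : word n | covers u v]|.

Definition degpoly (R : comRingType) (n : nat) (x y : R) : R :=
  (\sum_(u : word n | is_triword u) x ^+ indeg u * y ^+ outdeg u)%R.

(* Main.v *)
Require Import Defs.
From mathcomp Require Import all_boot all_algebra.
Import GRing.Theory.
Set Implicit Arguments. Unset Strict Implicit. Unset Printing Implicit Defensive.

Definition c0 : 'I_3 := @Ordinal 3 0 isT.
Definition c1 : 'I_3 := @Ordinal 3 1 isT.
Definition c2 : 'I_3 := @Ordinal 3 2 isT.

Lemma ord3 (c : 'I_3) : [\/ val c = 0, val c = 1 | val c = 2]%N.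
Proof. case: c => [[|[|[|k]]] //= H]; by constructor. Qed.

Definition upd n (u : word n) (i : 'I_n) (c : 'I_3) : word n :=
  [ffun j => if j == i then c else u j].

Lemma updE n (u : word n) i c j : upd u i c j = if j == i then c else u j.
Proof. by rewrite ffunE. Qed.

Lemma twP n (u : word n) :
  reflect ((forall i : 'I_n, val i = 0 -> val (u i) <> 2) /\
           (forall i j : 'I_n, (i < j)%N -> val (u i) = 0 -> val (u j) <> 1))
          (is_triword u).
Proof.
apply: (iffP andP) => [[/forallP H1 /forallP H2]|[H1 H2]]; split.
- move=> i Hi; move: (H1 i); rewrite Hi /= => /eqP; done.
- move=> i j Hij Hi; move: (H2 i) => /forallP /(_ j); rewrite Hij Hi /= => /eqP; done.
- apply/forallP => i; apply/implyP => /eqP Hi; apply/eqP; exact: H1.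
- apply/forallP => i; apply/forallP => j; apply/implyP => /andP [Hij /eqP Hi].
  exact/eqP/(H2 _ _ Hij Hi).
Qed.

Lemma leWP n (u v : word n) : reflect (forall i, (val (u i) <= val (v i))%N) (leW u v).
Proof. exact: forallP. Qed.

Lemma neq_ffun n (u v : word n) : u != v -> exists i, u i != v i.
Proof.
move=> H; case: (pickP (fun i => u i != v i)) => [i Hi|H0]; first by exists i.
have E : u = v by apply/ffunP => i; move: (H0 i) => /= /negbFE /eqP.
by rewrite E eqxx in H.
Qed.
From mathcomp Require Import zify.

Definition nzb n (u : word n) (i : 'I_n) := [exists j : 'I_n, (j < i)%N && (val (u j) == 0)].
Definition upc n (u : word n) (i : 'I_n) : 'I_3 :=
  if (val (u i) == 0) && ~~ nzb u i then c1 else c2.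
Definition Pc n (u : word n) (i : 'I_n) :=
  (val (u i) == 0) || ((val (u i) == 1) && (0 < i)%N).

Lemma nzbP n (u : word n) (i : 'I_n) : reflect (exists2 j : 'I_n, (j < i)%N & val (u j) = 0) (nzb u i).
Proof.
apply: (iffP existsP) => [[j /andP [H1 /eqP H2]]|[j H1 H2]]; exists j => //.
by rewrite H1 H2.
Qed.

Lemma upd_ne n (u : word n) i c j : j != i -> upd u i c j = u j.
Proof. by rewrite updE => /negbTE ->. Qed.
Lemma upd_eq n (u : word n) i c : upd u i c i = c.
Proof. by rewrite updE eqxx. Qed.

Lemma ffun_upd n (u v : word n) i : (forall j, j != i -> v j = u j) -> v = upd u i (v i).
Proof.
move=> H; apply/ffunP => j; rewrite updE; case: eqP => [->|/eqP Hj] //; exact: H.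
Qed.

Lemma ltn_ord3 (c : 'I_3) : (val c < 3)%N.
Proof. exact: ltn_ord. Qed.

Lemma arC (b : nat) : b <> 1 -> (0 < b)%N -> (b < 3)%N -> b = 2.
Proof. lia. Qed.
Lemma arA (a b : nat) : (a < b)%N -> (b < 3)%N -> a = 1 -> b = 2.
Proof. lia. Qed.
Lemma arB (a b : nat) : (a < b)%N -> (b < 3)%N -> a = 2 -> False.
Proof. lia. Qed.
Lemma arD (a b c : nat) : b != a -> b != c -> (b <= c)%N -> (a <= b)%N -> (c < 3)%N ->
  [/\ c = 2, b = 1 & a = 0].
Proof. move=> /eqP H1 /eqP H2 H3 H4 H5; split; lia. Qed.

Lemma cover_up n (u v : word n) : is_triword u ->
  covers u v = [exists i, Pc u i && (v == upd u i (upc u i))].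
Proof.
move=> Tu; have [Tu0 Tu1] := twP _ Tu.
apply/idP/idP.
- case/and4P => _ Tv /andP [Luv Nuv] Nb.
  have [Tv0 Tv1] := twP _ Tv.
  have Le := leWP _ _ Luv.
  have [i0 Hi0] := neq_ffun Nuv.
  case: (@arg_minnP _ i0 (fun j => u j != v j) (fun i : 'I_n => val i) Hi0) => i Hi Hmin.
  have eqb : forall j : 'I_n, (j < i)%N -> u j = v j.
    move=> j Hj; apply/eqP; apply: contraTT Hj => Hj; rewrite -leqNgt; exact: Hmin.
  have Hlt : (val (u i) < val (v i))%N.
    by rewrite ltn_neqAle Le andbT; apply: contra Hi => /eqP /val_inj ->.
  set w := upd u i (v i).
  have Tw : is_triword w.
    apply/twP; split.
    + move=> j Hj; rewrite updE; case: eqP => [E|_]; [subst; exact: Tv0 | exact: Tu0].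
    + move=> j k Hjk; rewrite !updE; case: eqP => [Eji|/eqP Hji]; case: eqP => [Hki|/eqP Hki].
      * by move: Hjk; rewrite Hki Eji ltnn.
      * subst j; move=> Hv; have Hu : val (u i) = 0 by move: Hlt; rewrite Hv.
        exact: Tu1 Hjk Hu.
      * move=> Hu; subst k; rewrite (eqb j Hjk) in Hu; exact: Tv1 Hjk Hu.
      * exact: Tu1.
  have Lw : ltW u w.
    apply/andP; split.
    + apply/leWP => j; rewrite updE; case: eqP => [->|_] //; exact: ltnW.
    + apply/eqP => E; move: Hlt; rewrite E /w upd_eq ltnn //.
  have Ew : v = w.
    apply/eqP; rewrite eq_sym; apply: contraNT Nb => Nwv.
    apply/existsP; exists w; rewrite Tw Lw /=; apply/andP; split => //.
    apply/leWP => j; rewrite updE; case: eqP => [->|_] //.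
  have Hvi : forall j, j != i -> val (v j) = val (u j).
    by move=> j Hj; rewrite Ew upd_ne.
  apply/existsP; exists i.
  have Hv2 : (val (v i) < 3)%N := ltn_ord3 _.
  have [Hu0|Hu1|Hu2] := ord3 (u i).
  + rewrite /Pc Hu0 eqxx /=; apply/eqP; rewrite {1}Ew; congr upd.
    apply: val_inj; rewrite /upc Hu0 eqxx /=.
    case: (boolP (nzb u i)) => [/nzbP [j Hj Hj0]|Hn] /=.
    * have Hv0 : val (v j) = 0 by rewrite -(eqb j Hj).
      apply: arC (Tv1 _ _ Hj Hv0) _ Hv2; move: Hlt; by rewrite Hu0.
    * case: (ord3 (v i)) => [H|H|H] //; first by move: Hlt; rewrite Hu0 H.
      exfalso; move/negP: Nb; apply; apply/existsP.
      exists (upd u i c1); apply/and3P; split.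
      -- apply/twP; split.
         ++ move=> j Hj; rewrite updE; case: eqP => [_|_] //; exact: Tu0.
         ++ move=> j k Hjk; rewrite !updE; case: eqP => [Eji|/eqP Hji]; case: eqP => [Hki|/eqP Hki] //.
            ** move=> Hu _; subst k; move/negP: Hn; apply; apply/nzbP; by exists j.
            ** exact: Tu1.
      -- apply/andP; split.
         ++ apply/leWP => j; rewrite updE; case: eqP => [->|_] //; by rewrite Hu0.
         ++ apply/eqP => E; have := congr1 (fun f : word n => val (f i)) E; rewrite /= upd_eq Hu0 //.
      -- apply/andP; split.
         ++ apply/leWP => j; rewrite updE; case: eqP => [->|/eqP Hj]; first by rewrite H.
            by rewrite Hvi.
         ++ apply/eqP => E; have := congr1 (fun f : word n => val (f i)) E; rewrite /= upd_eq H //.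
  + have Hvi2 : val (v i) = 2 := arA Hlt Hv2 Hu1.
    rewrite /Pc Hu1 /=; apply/andP; split.
    * rewrite lt0n; apply/negP => /eqP H0; exact: Tv0 H0 Hvi2.
    * apply/eqP; rewrite {1}Ew; congr upd; apply: val_inj; by rewrite /upc Hu1 /= Hvi2.
  + by case: (arB Hlt Hv2 Hu2).
- case/existsP => i /andP [HP /eqP Ev]; subst v.
  set c := upc u i.
  have Hc : (val (u i) < val c)%N.
    rewrite /c /upc; move: HP; rewrite /Pc.
    by case: (ord3 (u i)) => H; rewrite H //=; case: (nzb u i).
  have Hc3 : (val c < 3)%N := ltn_ord3 _.
  have Hc2 : val c = 2 -> val (u i) = 0 -> nzb u i.
    move=> H1 H2; move: H1; rewrite /c /upc H2 /=; by case: (nzb u i).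
  have Tv : is_triword (upd u i c).
    apply/twP; split.
    + move=> j Hj; rewrite updE; case: eqP => [E|_]; last exact: Tu0.
      subst j => H2.
      have Hui : val (u i) = 0 by move: HP; rewrite /Pc Hj andbF orbF => /eqP.
      have [k] := nzbP _ _ (Hc2 H2 Hui); by rewrite Hj.
    + move=> j k Hjk; rewrite !updE; case: eqP => [Eji|/eqP Hji]; case: eqP => [Hki|/eqP Hki].
      * by move: Hjk; rewrite Hki Eji ltnn.
      * by move=> H; move: Hc; rewrite H.
      * subst k => Hu Hc1; move: HP Hc1; rewrite /c /upc /Pc.
        have -> : nzb u i by apply/nzbP; exists j.
        by rewrite andbF.
      * exact: Tu1.
  clearbody c.
  rewrite /covers Tu Tv /=; apply/andP; split.
    apply/andP; split.
    + apply/leWP => j; rewrite updE; case: eqP => [->|_] //; exact: ltnW.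
    + apply/eqP => E; have := congr1 (fun f : word n => val (f i)) E.
      rewrite /= upd_eq => H; move: Hc; change (val (u i)) with (nat_of_ord (u i)).
      by rewrite H ltnn.
  apply/negP => /existsP [w /and3P [Tw /andP [Luw Nuw] /andP [Lwv Nwv]]].
  have L1 := leWP _ _ Luw; have L2 := leWP _ _ Lwv.
  have Hwj : forall j, j != i -> w j = u j.
    move=> j Hj; apply: val_inj; apply/eqP; rewrite eqn_leq L1 andbT.
    by have := L2 j; rewrite upd_ne.
  have Hwi1 : val (w i) != val (u i).
    apply: contra Nuw => /eqP /val_inj Hwi; apply/eqP/ffunP => j.
    case: (eqVneq j i) => [->|Hj] //; by rewrite Hwj.
  have Hwi2 : val (w i) != val c.
    apply: contra Nwv => /eqP /val_inj Hwi; apply/eqP/ffunP => j.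
    rewrite updE; case: (eqVneq j i) => [->|Hj] //; by rewrite Hwj.
  have := L1 i; have := L2 i; rewrite upd_eq => La0 Lb0.
  have La : (nat_of_ord (w i) <= nat_of_ord c)%N := La0.
  have Lb : (nat_of_ord (u i) <= nat_of_ord (w i))%N := Lb0.
  have {}Hwi1 : (nat_of_ord (w i) != nat_of_ord (u i))%N := Hwi1.
  have {}Hwi2 : (nat_of_ord (w i) != nat_of_ord c)%N := Hwi2.
  have {}Hc3 : (nat_of_ord c < 3)%N := Hc3.
  have [Ec Ewi Eui] := arD Hwi1 Hwi2 La Lb Hc3.
  have [k Hk Hk0] := nzbP _ _ (Hc2 Ec Eui).
  have [_ Tw1] := twP _ Tw.
  apply: (Tw1 k i Hk) => //.
  by rewrite Hwj // neq_ltn Hk.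
Qed.

Definition dnc n (u : word n) (i : 'I_n) : 'I_3 :=
  if (val (u i) == 2) && ~~ nzb u i then c1 else c0.
Definition oa n (u : word n) (i : 'I_n) := [exists j : 'I_n, (i < j)%N && (val (u j) == 1)].
Definition Dc n (u : word n) (i : 'I_n) :=
  (val (u i) == 2) || ((val (u i) == 1) && ~~ oa u i).

Lemma nzb_upd n (u : word n) i c : nzb (upd u i c) i = nzb u i.
Proof.
apply/nzbP/nzbP => [[j Hj Hj0]|[j Hj Hj0]]; exists j => //;
  have Hji : j != i by rewrite neq_ltn Hj.
  by move: Hj0; rewrite upd_ne.
by rewrite upd_ne.
Qed.

Lemma oaP n (u : word n) (i : 'I_n) : reflect (exists2 j : 'I_n, (i < j)%N & val (u j) = 1) (oa u i).
Proof.
apply: (iffP existsP) => [[j /andP [H1 /eqP H2]]|[j H1 H2]]; exists j => //.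
by rewrite H1 H2.
Qed.

Lemma cover_dn n (u v : word n) : is_triword u ->
  covers v u = [exists i, Dc u i && (v == upd u i (dnc u i))].
Proof.
move=> Tu; have [Tu0 Tu1] := twP _ Tu.
apply/idP/idP.
- move=> C; have Tv : is_triword v by case/and4P: C.
  have [Tv0 Tv1] := twP _ Tv.
  rewrite (cover_up _ Tv) in C; case/existsP: C => i /andP [HP /eqP Eu].
  have Huj : forall j, j != i -> v j = u j by move=> j Hj; rewrite Eu upd_ne.
  have Hui : u i = upc v i by rewrite Eu upd_eq.
  have Hnz : nzb u i = nzb v i by rewrite Eu nzb_upd.
  apply/existsP; exists i; rewrite [X in X == _](ffun_upd Huj).
  case: (ord3 (v i)) => Hv.
  + case: (boolP (nzb v i)) => Hn.
    * have Hu2 : val (u i) = 2 by rewrite Hui /upc Hn andbF.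
      rewrite /Dc Hu2 eqxx /=; apply/eqP; congr upd; apply: val_inj.
      by rewrite /dnc Hu2 Hnz Hn Hv.
    * have Hu1 : val (u i) = 1 by rewrite Hui /upc Hn Hv.
      rewrite /Dc Hu1 /=; apply/andP; split.
      -- apply/oaP => [[j Hj Hj1]]; apply: (Tv1 i j Hj Hv).
         by rewrite Huj // neq_ltn Hj orbT.
      -- apply/eqP; congr upd; apply: val_inj; by rewrite /dnc Hu1 Hv.
  + have Hi0 : (0 < i)%N by move: HP; rewrite /Pc Hv /=.
    have Hu2 : val (u i) = 2 by rewrite Hui /upc Hv.
    have Hn : ~~ nzb v i.
      apply/nzbP => [[j Hj Hj0]]; exact: (Tv1 j i Hj Hj0 Hv).
    rewrite /Dc Hu2 eqxx /=; apply/eqP; congr upd; apply: val_inj.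
    by rewrite /dnc Hu2 Hnz (negbTE Hn) Hv.
  + by move: HP; rewrite /Pc Hv.
- case/existsP => i /andP [HD /eqP Ev]; subst v.
  have Hd2 : val (dnc u i) != 2 by rewrite /dnc; case: ifP.
  have Tv : is_triword (upd u i (dnc u i)).
    apply/twP; split.
    + move=> j Hj; rewrite updE; case: eqP => [_|_]; [exact/eqP | exact: Tu0].
    + move=> j k Hjk; rewrite !updE; case: eqP => [Eji|/eqP Hji]; case: eqP => [Hki|/eqP Hki].
      * by move: Hjk; rewrite Hki Eji ltnn.
      * subst j => Hd Hk1; move: HD; rewrite /Dc.
        case: (ord3 (u i)) => Hu; rewrite Hu //=.
        -- move=> Hoa; move/oaP: Hoa; apply; by exists k.
        -- move: Hd; rewrite /dnc Hu eqxx /=; case: (boolP (nzb u i)) => //= /nzbP [l Hl Hl0] _ _.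
           exact: (Tu1 l k (ltn_trans Hl Hjk) Hl0 Hk1).
      * subst k => Hj0 Hd1; move: Hd1; rewrite /dnc.
        have -> : nzb u i by apply/nzbP; exists j.
        by rewrite andbF.
      * exact: Tu1.
  rewrite (cover_up _ Tv); apply/existsP; exists i; rewrite /Pc upd_eq.
  apply/andP; split.
  + rewrite /dnc; case: ifP => [/andP [/eqP H2 _]|_] //=.
    rewrite lt0n; apply/negP => /eqP H0; exact: Tu0 i H0 H2.
  + apply/eqP/ffunP => j; rewrite updE; case: (eqVneq j i) => [->|Hj]; last by rewrite upd_ne.
    apply: val_inj; rewrite /upc nzb_upd upd_eq.
    move: HD; rewrite /Dc /dnc; case: (ord3 (u i)) => Hu; rewrite Hu //=.
    * case: (boolP (nzb u i)) => [/nzbP [l Hl Hl0]|] //= _.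
      by case: (Tu1 l i Hl Hl0 Hu).
    * by case: (nzb u i).
Qed.

Lemma upd_inj n (u : word n) (f : 'I_n -> 'I_3) (A : {pred 'I_n}) :
  {in A, forall i, f i != u i} -> {in A &, injective (fun i => upd u i (f i))}.
Proof.
move=> H i j Hi Hj E; apply/eqP; apply: contraT => Hij.
have := congr1 (fun g : word n => g i) E; rewrite /= upd_eq upd_ne //.
by move/eqP; rewrite (negbTE (H i Hi)).
Qed.

Lemma card_sum n (p : pred 'I_n) : #|[set i | p i]| = \sum_(i < n) (p i : nat).
Proof.
rewrite -sum1_card big_mkcond /=; apply: eq_bigr => i _; rewrite inE; by case: (p i).
Qed.

Lemma outdegE n (u : word n) : is_triword u -> outdeg u = \sum_(i < n) (Pc u i : nat).
Proof.
move=> Tu; rewrite /outdeg -card_sum.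
have -> : [set v | covers u v] = [set upd u i (upc u i) | i in [set i | Pc u i]].
  apply/setP => v; rewrite inE (cover_up _ Tu); apply/existsP/imsetP.
  - move=> [i /andP [H1 /eqP H2]]; exists i => //; by rewrite inE.
  - move=> [i H1 H2]; exists i; rewrite inE in H1; by rewrite H1 H2 eqxx.
apply: card_in_imset; apply: upd_inj => i; rewrite inE /Pc /upc.
case: (ord3 (u i)) => H; rewrite H //=.
all: move=> _; apply/eqP => /(congr1 val); rewrite H /=; by case: (nzb u i).
Qed.

Lemma indegE n (u : word n) : is_triword u -> indeg u = \sum_(i < n) (Dc u i : nat).
Proof.
move=> Tu; rewrite /indeg -card_sum.
have -> : [set v | covers v u] = [set upd u i (dnc u i) | i in [set i | Dc u i]].
  apply/setP => v; rewrite inE (cover_dn _ Tu); apply/existsP/imsetP.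
  - move=> [i /andP [H1 /eqP H2]]; exists i => //; by rewrite inE.
  - move=> [i H1 H2]; exists i; rewrite inE in H1; by rewrite H1 H2 eqxx.
apply: card_in_imset; apply: upd_inj => i; rewrite inE /Dc /dnc.
case: (ord3 (u i)) => H; rewrite H //=.
all: move=> _; apply/eqP => /(congr1 val); rewrite H /=; by case: (nzb u i).
Qed.

Definition app n (u : word n) (c : 'I_3) : word n.+1 :=
  [ffun i => if unlift ord_max i is Some j then u j else c].
Definition init n (v : word n.+1) : word n := [ffun j => v (lift ord_max j)].

Lemma appL n (u : word n) c j : app u c (lift ord_max j) = u j.
Proof. by rewrite ffunE liftK. Qed.
Lemma appR n (u : word n) c : app u c ord_max = c.
Proof. by rewrite ffunE unlift_none. Qed.
Lemma app_init n (v : word n.+1) : app (init v) (v ord_max) = v.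
Proof.
apply/ffunP => i; case: (unliftP ord_max i) => [j ->|->]; by rewrite ?appL ?appR ?ffunE.
Qed.
Lemma init_app n (u : word n) c : init (app u c) = u.
Proof. by apply/ffunP => j; rewrite ffunE appL. Qed.

Lemma sum_app (R : nmodType) n (G : word n.+1 -> R) :
  (\sum_(v : word n.+1) G v = \sum_(u : word n) \sum_(c < 3) G (app u c))%R.
Proof.
rewrite pair_big /= (reindex (fun p : word n * 'I_3 => app p.1 p.2)) /=.
  by apply: eq_bigl.
exists (fun v => (init v, v ord_max)) => [[u c] _|v _] /=.
  by rewrite init_app appR.
exact: app_init.
Qed.

Lemma val_lift_max n (j : 'I_n) : nat_of_ord (lift ord_max j) = nat_of_ord j.
Proof. exact: lift_max. Qed.

Lemma sumS n (F : 'I_n.+1 -> nat) :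
  \sum_(i < n.+1) F i = \sum_(j < n) F (lift ord_max j) + F ord_max.
Proof.
rewrite big_ord_recr /=; congr addn; apply: eq_bigr => j _; congr F; apply: val_inj.
exact: (esym (lift_max j)).
Qed.

Lemma existsS n (P : pred 'I_n.+1) :
  [exists i, P i] = [exists j : 'I_n, P (lift ord_max j)] || P ord_max.
Proof.
apply/existsP/orP => [[i]|[/existsP [j Hj]|H]].
- case: (unliftP ord_max i) => [j ->|->] H; [left; apply/existsP; by exists j | by right].
- by exists (lift ord_max j).
- by exists ord_max.
Qed.

Definition T2 n (u : word n) := \sum_(i < n) (val (u i) == 2 : nat).
Definition S1 n (u : word n) := \sum_(i < n) ((val (u i) == 1) && ~~ oa u i : nat).
Definition O1 n (u : word n) := \sum_(i < n) (Pc u i : nat).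
Definition E1 n (u : word n) := [exists i, val (u i) == 1].
Definition hz n (u : word n) := [exists i, val (u i) == 0].

Lemma oa_appL n (u : word n) c j : oa (app u c) (lift ord_max j) = oa u j || (val c == 1).
Proof.
rewrite /oa existsS appR.
have -> : (lift ord_max j < @ord_max n)%N by rewrite val_lift_max ltn_ord.
congr orb; apply: eq_existsb => k; by rewrite appL !val_lift_max.
Qed.

Lemma oa_appR n (u : word n) c : oa (app u c) ord_max = false.
Proof.
apply/negbTE/negP => /existsP [k /andP [H _]]; move: H; rewrite ltnNge; by rewrite -ltnS ltn_ord.
Qed.

Lemma S1_app n (u : word n) c : S1 (app u c) = if val c == 1 then 1 else S1 u.
Proof.
rewrite /S1 sumS appR oa_appR andbT.
case: eqP => H /=.
- rewrite big1 // => j _; by rewrite oa_appL H eqxx orbT andbF.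
- rewrite addn0; apply: eq_bigr => j _; rewrite appL oa_appL.
  have -> : (val c == 1) = false by apply/eqP.
  by rewrite orbF.
Qed.

Lemma E1_app n (u : word n) c : E1 (app u c) = E1 u || (val c == 1).
Proof. rewrite /E1 existsS appR; congr orb; apply: eq_existsb => k; by rewrite appL. Qed.
Lemma hz_app n (u : word n) c : hz (app u c) = hz u || (val c == 0).
Proof. rewrite /hz existsS appR; congr orb; apply: eq_existsb => k; by rewrite appL. Qed.
Lemma T2_app n (u : word n) c : T2 (app u c) = T2 u + (val c == 2).
Proof. rewrite /T2 sumS appR; congr addn; apply: eq_bigr => k _; by rewrite appL. Qed.
Lemma O1_app n (u : word n) c : O1 (app u c) = O1 u + ((val c == 0) || (val c == 1) && (0 < n)%N).
Proof.
rewrite /O1 sumS /Pc appR; congr addn; apply: eq_bigr => k _; by rewrite appL val_lift_max.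
Qed.

Lemma S1_E1 n (u : word n) : S1 u = E1 u.
Proof.
elim: n u => [|n IH] u.
  rewrite /S1 /E1 big_ord0; case: existsP => // [[[]]] //.
rewrite -(app_init u) S1_app E1_app IH.
by case: (val (u ord_max) == 1); rewrite ?orbT ?orbF.
Qed.

Lemma vlm n (j : 'I_n) : val (lift ord_max j) = val j.
Proof. exact: lift_max. Qed.

Lemma tw_app n (u : word n) c :
  is_triword (app u c) = [&& is_triword u, (n == 0) ==> (val c != 2) & (val c == 1) ==> ~~ hz u].
Proof.
apply/idP/idP.
- move/twP => [H0 H1]; apply/and3P; split.
  + apply/twP; split.
    * move=> j Hj; have := H0 (lift ord_max j); rewrite appL; apply. by rewrite vlm.
    * move=> j k Hjk; have := H1 (lift ord_max j) (lift ord_max k); rewrite !appL; apply.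
      by rewrite !val_lift_max ?vlm.
  + apply/implyP => /eqP Hn; apply/eqP; have := H0 ord_max; rewrite appR; exact.
  + apply/implyP => /eqP Hc; apply/negP => /existsP [j /eqP Hj].
    have := H1 (lift ord_max j) ord_max; rewrite appL appR; apply => //.
    by rewrite val_lift_max ?vlm ltn_ord.
- case/and3P => /twP [Tu0 Tu1] /implyP Hn /implyP Hc; apply/twP; split.
  + move=> i; case: (unliftP ord_max i) => [j ->|->]; rewrite ?appL ?appR.
    * rewrite vlm; exact: Tu0.
    * move=> H; apply/eqP; apply: Hn; by apply/eqP.
  + move=> i k; case: (unliftP ord_max i) => [j ->|->]; case: (unliftP ord_max k) => [l ->|->];
      rewrite ?appL ?appR ?val_lift_max ?vlm.
    * exact: Tu1.
    * move=> _ Hj Hc1; have := Hc (introT eqP Hc1); move/negP; apply; apply/existsP; exists j.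
      by apply/eqP.
    * move=> H; exfalso; move: H; rewrite ltnNge; by rewrite ltnW ?ltn_ord.
    * by rewrite ltnn.
Qed.

Lemma E1_nz n (u : word n.+1) : is_triword u -> ~~ hz u -> E1 u.
Proof.
move=> /twP [Tu0 _] Hz; apply/existsP; exists ord0.
case: (ord3 (u ord0)) => H; last by case: (Tu0 ord0 erefl H).
- by move/negP: Hz; case; apply/existsP; exists ord0; rewrite H.
- by rewrite H.
Qed.

Lemma Dc_sum n (u : word n) : \sum_(i < n) (Dc u i : nat) = T2 u + S1 u.
Proof.
rewrite /T2 /S1 -big_split; apply: eq_bigr => i _; rewrite /Dc.
by case: (ord3 (u i)) => ->.
Qed.

Lemma hz0 (u : word 0) : hz u = false.
Proof. by apply/negbTE/negP => /existsP [[]]. Qed.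
Lemma E10 (u : word 0) : E1 u = false.
Proof. by apply/negbTE/negP => /existsP [[]]. Qed.

From mathcomp Require Import ring.

Definition Fw (R : comRingType) (x y : R) n (u : word n) : R := (x ^+ (T2 u + E1 u) * y ^+ (O1 u))%R.

Lemma degpolyE (R : comRingType) n (x y : R) :
  degpoly n x y = (\sum_(u : word n | is_triword u) Fw x y u)%R.
Proof.
by apply: eq_bigr => u Tu; rewrite /Fw indegE // outdegE // Dc_sum S1_E1.
Qed.

Definition NN (R : comRingType) (x y : R) n := (\sum_(u : word n | is_triword u && ~~ hz u) Fw x y u)%R.
Definition ZZ (R : comRingType) (x y : R) n := (\sum_(u : word n | is_triword u && hz u) Fw x y u)%R.

Lemma splitNZ (R : comRingType) n (x y : R) :
  (\sum_(u : word n | is_triword u) Fw x y u = NN x y n + ZZ x y n)%R.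
Proof. by rewrite (bigID (@hz n)) /= addrC. Qed.

Lemma N_rec (R : comRingType) n (x y : R) :
  NN x y n.+1 = ((if n == 0 then x else x + y) * NN x y n)%R.
Proof.
rewrite /NN [in LHS]big_mkcond sum_app [in RHS]big_mkcond mulr_sumr; apply: eq_bigr => u _.
rewrite !big_ord_recr big_ord0 /= /Fw !tw_app !hz_app !T2_app !E1_app !O1_app /=.
rewrite (_ : (0 == 1)%N = false) // (_ : (2 == 1)%N = false) // eqxx.
case: (boolP (is_triword u)) => Tu; case: (boolP (hz u)) => Hz /=;
  rewrite ?andbF ?andbT ?orbF ?orbT ?mulr0 ?add0r ?addr0 //.
move: u Tu Hz; case: n => [|m] u Tu Hz /=.
- rewrite E10 /= !addn0 addr0 !exprD; ring.
- rewrite E1_nz //= !addn0 !exprD; ring.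
Qed.

Lemma Z_rec (R : comRingType) n (x y : R) :
  ZZ x y n.+1 = ((x + y) * ZZ x y n + y * NN x y n)%R.
Proof.
rewrite /NN /ZZ [in LHS]big_mkcond sum_app !(big_mkcond (fun u => is_triword u && _)) !mulr_sumr -big_split.
apply: eq_bigr => u _.
rewrite !big_ord_recr big_ord0 /= /Fw !tw_app !hz_app !T2_app !E1_app !O1_app /=.
rewrite (_ : (0 == 1)%N = false) // (_ : (2 == 1)%N = false) // eqxx.
case: (boolP (is_triword u)) => Tu; case: (boolP (hz u)) => Hz /=;
  rewrite ?andbF ?andbT ?orbF ?orbT ?mulr0 ?add0r ?addr0 //.
- move: u Tu Hz; case: n => [|m] u Tu Hz /=; first by rewrite hz0 in Hz.
  rewrite !addn0 !exprD; move: (x ^+ T2 u)%R (x ^+ E1 u)%R (y ^+ O1 u)%R => a b c; ring.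
- rewrite implybT !addn0 !exprD; move: (x ^+ T2 u)%R (x ^+ E1 u)%R (y ^+ O1 u)%R => a b c; ring.
Qed.

Lemma N0 (R : comRingType) (x y : R) : NN x y 0 = 1%R.
Proof.
rewrite /NN (eq_bigl predT) => [|u]; last by rewrite hz0 andbT; apply/twP; split => [[]|[]].
rewrite (eq_bigr (fun _ => 1%R)) => [|u _]; last by rewrite /Fw /T2 /O1 E10 !big_ord0 mulr1.
by rewrite sumr_const card_ffun !card_ord.
Qed.

Lemma Z0 (R : comRingType) (x y : R) : ZZ x y 0 = 0%R.
Proof. by rewrite /ZZ big_pred0 // => u; rewrite hz0 andbF. Qed.

Lemma N_closed (R : comRingType) m (x y : R) : NN x y m.+1 = (x * (x + y) ^+ m)%R.
Proof.
elim: m => [|m IH]; first by rewrite N_rec N0 /=; ring.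
by rewrite N_rec /= IH exprS; ring.
Qed.

Lemma W_closed (R : comRingType) m (x y : R) :
  (NN x y m.+1 + ZZ x y m.+1 =
  if m == 0 then x + y else (x + y) ^+ (m - 1) * (x ^+ 2 + (m.+2)%:R * x * y + y ^+ 2))%R.
Proof.
elim: m => [|m IH]; first by rewrite N_rec Z_rec N0 Z0 /=; ring.
rewrite N_rec Z_rec /=.
transitivity ((x + y) * (NN x y m.+1 + ZZ x y m.+1) + y * NN x y m.+1)%R; first by ring.
rewrite IH N_closed.
case: m {IH} => [|k] /=; first by ring.
rewrite (_ : (k.+2 - 1)%N = k.+1) // (_ : (k.+1 - 1)%N = k) //.
rewrite (_ : ((k.+4)%:R : R)%R = ((k.+3)%:R + 1)%R); last by rewrite natr1.
rewrite !exprS; move: ((x + y) ^+ k)%R ((k.+3)%:R)%R => p r; ring.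
by rewrite subn1.
Qed.

Unset Implicit Arguments.
Set Strict Implicit.
Local Open Scope ring_scope.

Theorem mainTheorem14 (R : comRingType) (n : nat) (x y : R) :
  (1 <= n)%N ->
  degpoly n x y =
  (if n == 1%N then x + y
   else (x + y) ^+ (n - 2) * (x ^+ 2 + (n.+1)%:R * x * y + y ^+ 2)).
Proof.
case: n => [//|m] _; rewrite degpolyE splitNZ W_closed /=.
by rewrite subSS subn1.
Qed.
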